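(* For all $t\ge0$ and $x,y\in\mathbb R^d$, $$H^\nu_t(x,y)\le2(1+|y|)\hbar^\nu_t(x),$$ where $H^\nu_t(x,y):=\int_{B_\ell^c}\log\big(1+\frac{|z|}{1+|x-y|}\big)\nu_{t,x}(dz)$ and $\hbar^\nu_t(x):=\int_{B_\ell^c}\log\big(1+\frac{|z|}{1+|x|}\big)\nu_{t,x}(dz)$.
   Context: $d\ge1$, $\ell\in(0,1/\sqrt2)$, $B_\ell^c=\{z\in\mathbb R^d:|z|\ge\ell\}$, and $\{\nu_{t,x}\}_{t\ge0,x\in\mathbb R^d}$ is a family of (nonnegative) Lévy measures on $\mathbb R^d$. *)

(* Defs.v *)
From HB Require Import structures.
From mathcomp Require Import all_boot all_order all_algebra.
From mathcomp Require Import all_classical all_reals all_analysis.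
Set Implicit Arguments. Unset Strict Implicit. Unset Printing Implicit Defensive.
Import Order.TTheory GRing.Theory Num.Theory.
Local Open Scope classical_set_scope.
Local Open Scope ring_scope.

(* R^d is modelled as d.-tuple R, equipped by MathComp-Analysis with the
   product (= Borel) sigma-algebra generated by the coordinate maps. *)

Definition enorm (R : realType) (d : nat) (z : d.-tuple R) : R :=
  Num.sqrt (\sum_(i < d) (tnth z i) ^+ 2).

Definition vsub (R : realType) (d : nat) (x y : d.-tuple R) : d.-tuple R :=
  [tuple tnth x i - tnth y i | i < d].

Definition vzero (R : realType) (d : nat) : d.-tuple R := [tuple 0 | i < d].

Definition ball_compl (R : realType) (d : nat) (l : R) : set (d.-tuple R) :=
  [set z | l <= enorm z].

Definition is_levy_measure (R : realType) (d : nat)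
    (nu : {measure set (d.-tuple R) -> \bar R}) : Prop :=
  nu [set vzero R d] = 0%E /\
  (\int[nu]_(z in [set: d.-tuple R]) (Num.min 1 (enorm z ^+ 2))%:E < +oo)%E.

Definition Hnu (R : realType) (d : nat) (l : R)
    (nu : R -> d.-tuple R -> {measure set (d.-tuple R) -> \bar R})
    (t : R) (x y : d.-tuple R) : \bar R :=
  \int[nu t x]_(z in ball_compl l)
     (ln (1 + enorm z / (1 + enorm (vsub x y))))%:E.

Definition hbarnu (R : realType) (d : nat) (l : R)
    (nu : R -> d.-tuple R -> {measure set (d.-tuple R) -> \bar R})
    (t : R) (x : d.-tuple R) : \bar R :=
  \int[nu t x]_(z in ball_compl l)
     (ln (1 + enorm z / (1 + enorm x)))%:E.

(* Main.v *)
Require Import Defs.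
From HB Require Import structures.
From mathcomp Require Import all_boot all_order all_algebra.
From mathcomp Require Import all_classical all_reals all_analysis.
From mathcomp Require Import ring lra.
Import Order.TTheory GRing.Theory Num.Theory.
Local Open Scope classical_set_scope.
Local Open Scope ring_scope.
Import HBNNSimple.
Lemma ln_frac_ge {R : realType} (b : R) : 0 <= b -> b / (1 + b) <= ln (1 + b).
Proof.
move=> b0.
have p : 0 < 1 + b by lra.
have h : -1 < - (b / (1 + b)).
  rewrite ltrN2 ltr_pdivrMr // mul1r; lra.
have := le_ln1Dx h.
have -> : 1 - b / (1 + b) = (1 + b)^-1.
  by field; lra.
rewrite lnV ?posrE //; lra.
Qed.

Lemma ln_scale (R : realType) (b C : R) : 0 <= b -> 1 <= C ->
  ln (1 + C * b) <= C * ln (1 + b).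
Proof.
move=> b0 C1.
have p : 0 < 1 + b by lra.
have q : 0 < 1 + C * b by nra.
have e : 1 + C * b = (1 + b) * (1 + (C - 1) * (b / (1 + b))).
  by field; lra.
have r : 0 < 1 + (C - 1) * (b / (1 + b)).
  by rewrite ltr_wpDr // mulr_ge0 ?divr_ge0; lra.
rewrite e lnM ?posrE //.
have h1 : -1 < (C - 1) * (b / (1 + b)).
  have : 0 <= (C - 1) * (b / (1 + b)) by rewrite mulr_ge0 ?divr_ge0; lra.
  lra.
have := le_ln1Dx h1.
have := @ln_frac_ge R b b0.
have : 0 <= C - 1 by lra.
nra.
Qed.
Lemma enorm_ge0 (R : realType) d (z : d.-tuple R) : 0 <= enorm z.
Proof. exact: sqrtr_ge0. Qed.

Lemma enorm_bound (R : realType) d (x y : d.-tuple R) :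
  enorm x <= 2 * (enorm (vsub x y) + enorm y).
Proof.
rewrite /enorm.
set A := \sum_(i < d) tnth (vsub x y) i ^+ 2.
set B := \sum_(i < d) tnth y i ^+ 2.
have A0 : 0 <= A by apply: sumr_ge0 => i _; exact: sqr_ge0.
have B0 : 0 <= B by apply: sumr_ge0 => i _; exact: sqr_ge0.
have HX : \sum_(i < d) tnth x i ^+ 2 <= 2 * A + 2 * B.
  rewrite /A /B !mulr_sumr -big_split /=.
  apply: ler_sum => i _; rewrite /vsub tnth_mktuple.
  set a := tnth x i; set b := tnth y i.
  have := sqr_ge0 (a - 2 * b); nra.
set sa := Num.sqrt A; set sb := Num.sqrt B.
have sa0 : 0 <= sa by exact: sqrtr_ge0.
have sb0 : 0 <= sb by exact: sqrtr_ge0.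
have ea : sa ^+ 2 = A by rewrite sqr_sqrtr.
have eb : sb ^+ 2 = B by rewrite sqr_sqrtr.
have -> : 2 * (sa + sb) = Num.sqrt ((2 * (sa + sb)) ^+ 2).
  by rewrite sqrtr_sqr ger0_norm //; lra.
rewrite ler_sqrt; last by rewrite sqr_ge0.
apply: (le_trans HX).
rewrite -ea -eb; nra.
Qed.
Lemma int_le_scale d (T : measurableType d) (R : realType)
  (mu : {measure set T -> \bar R}) (D : set T) (f g : T -> \bar R) (c : R) :
  0 < c -> (forall x, D x -> 0 <= f x)%E -> (forall x, D x -> 0 <= g x)%E ->
  (forall x, D x -> f x <= c%:E * g x)%E ->
  (\int[mu]_(x in D) f x <= c%:E * \int[mu]_(x in D) g x)%E.
Proof.
move=> c0 f0 g0 fg.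
rewrite (ge0_integralE _ f0) (ge0_integralE _ g0) /=.
apply: ge_ereal_sup => _ [h /= hf <-].
have ci0 : 0 <= c^-1 by rewrite invr_ge0 ltW.
have Hs : (sintegral mu (scale_nnsfun h ci0) = c^-1%:E * sintegral mu h)%E.
  by rewrite -sintegralrM.
have Hle : (sintegral mu (scale_nnsfun h ci0) <=
   ereal_sup [set sintegral mu h0 | h0 in
     [set h0 : {nnsfun T >-> R} | forall x, ((h0 x)%:E <= (g \_ D) x)%E]])%E.
  apply: ereal_sup_ubound; exists (scale_nnsfun h ci0) => //= x.
  have := hf x; rewrite /patch; case: ifPn => [xD|_] hx.
  - have xD' : D x by rewrite inE in xD.
    have H := le_trans hx (fg x xD'); have := g0 x xD'.
    move: (g x) H => [r| |] //=; try by move=> *; rewrite leey.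
    rewrite -EFinM !lee_fin => H r0.
    by rewrite -(ler_pM2l c0) mulrA mulrV ?unitfE ?gt_eqF // mul1r.
  - have e : (point : \bar R) = 0%E by [].
    move: hx; rewrite e !lee_fin => hx.
    by rewrite mulr_ge0_le0.
rewrite Hs in Hle.
have -> : sintegral mu h = (c%:E * (c^-1%:E * sintegral mu h))%E.
  by rewrite muleA -EFinM mulrV ?unitfE ?gt_eqF // mul1e.
by rewrite lee_pmul2l.
Qed.

Lemma pointwise (R : realType) (a p q C : R) : 0 <= a -> 0 < p -> 0 < q ->
  1 <= C -> q <= C * p -> ln (1 + a / p) <= C * ln (1 + a / q).
Proof.
move=> a0 p0 q0 C1 qCp.
have aq0 : 0 <= a / q by rewrite divr_ge0 // ltW.
apply: (le_trans _ (@ln_scale R _ _ aq0 C1)).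
have h1 : a / p <= C * (a / q).
  rewrite ler_pdivrMr // mulrA (mulrC C) -mulrA -(mulrA a) ler_peMr //.
  by rewrite mulrCA ler_pdivlMl // mulr1.
have hp : 0 < 1 + a / p by rewrite ltr_wpDr // divr_ge0 // ltW.
rewrite ler_ln ?posrE //; first lra.
have : 0 <= C * (a / q) by rewrite mulr_ge0 //; lra.
lra.
Qed.

Theorem lemma3p5 (R : realType) (d : nat) (l : R)
    (nu : R -> d.-tuple R -> {measure set (d.-tuple R) -> \bar R}) :
  (1 <= d)%N ->
  0 < l -> l < 1 / Num.sqrt 2 ->
  (forall t x, is_levy_measure (nu t x)) ->
  forall (t : R) (x y : d.-tuple R), 0 <= t ->
  (Hnu l nu t x y <= (2 * (1 + enorm y))%:E * hbarnu l nu t x)%E.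
Proof.
move=> _ _ _ _ t x y _.
rewrite /Hnu /hbarnu.
have ny := @enorm_ge0 R d y; have nx := @enorm_ge0 R d x; have nxy := @enorm_ge0 R d (vsub x y).
have hb := @enorm_bound R d x y.
apply: int_le_scale.
- lra.
- move=> z _; rewrite lee_fin ln_ge0 // lerDl divr_ge0 ?enorm_ge0 //; lra.
- move=> z _; rewrite lee_fin ln_ge0 // lerDl divr_ge0 ?enorm_ge0 //; lra.
- move=> z _; rewrite -EFinM lee_fin; apply: pointwise; rewrite ?enorm_ge0 //; try lra.
  nra.
Qed.
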